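(* Let $m\ge1$, $d\ge1$ and let $A_0,\ldots,A_{m-1}$ be $d\times d$ real matrices. Let $V=\bigoplus_{i=0}^{2m-2}\mathbb{R}^d$, let $V_i\subseteq V$ be the subspace of vectors vanishing in every summand except possibly the $i$-th ($i=0,\ldots,2m-2$), and define linear maps $B_0,B_1\colon V\to V$ by \[B_0(v_0\oplus \cdots \oplus v_{2m-2}):=v_1 \oplus \cdots \oplus v_{2m-2} \oplus 0,\] \[B_1(v_0 \oplus \cdots \oplus v_{2m-2}):= 0 \oplus \cdots \oplus 0 \oplus A_0v_0 \oplus A_1v_1 \oplus \cdots \oplus A_{m-1}v_{m-1}\] (in the second formula the first $m-1$ summands are $0$, and $A_jv_j$ sits in summand $m-1+j$). Let $x=x_1x_2\cdots \in \{0,1\}^{\mathbb{N}}$ and suppose that $B_{x_n}\cdots B_{x_1} V_{m-1} \neq \{0\}$ for every $n \geq 1$. Then for every integer $n \geq 0$ exactly one of the symbols $x_{mn+1},\ldots,x_{m(n+1)}$ is equal to $1$, and the remainder are $0$. *)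

(* Defs.v *)
From mathcomp Require Import all_boot all_order all_algebra.
From mathcomp Require Export reals.
Set Implicit Arguments. Unset Strict Implicit. Unset Printing Implicit Defensive.
Import Order.TTheory GRing.Theory Num.Theory.
Local Open Scope ring_scope.

(* V = (R^d)^(2m-1), an element is a block vector v : 'I_(2m-1) -> 'cV_d;
   v i is the i-th summand v_i. *)
Definition nblk (m : nat) : nat := (2 * m - 1)%N.
Definition blkvec (R : realType) (m d : nat) := 'I_(nblk m) -> 'cV[R]_d.

(* access of the k-th summand by a natural number (0 outside the range) *)
Definition vat (R : realType) (m d : nat) (v : blkvec R m d) (k : nat) : 'cV[R]_d :=
  match (insub k : option 'I_(nblk m)) with
  | Some i => v i | None => 0 end.

Definition Aat (R : realType) (m d : nat) (A : 'I_m -> 'M[R]_d) (k : nat) : 'M[R]_d :=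
  match (insub k : option 'I_m) with
  | Some j => A j | None => 0 end.

Definition B0 (R : realType) (m d : nat) (v : blkvec R m d) : blkvec R m d :=
  fun i => vat v (i.+1).

Definition B1 (R : realType) (m d : nat) (A : 'I_m -> 'M[R]_d) (v : blkvec R m d)
  : blkvec R m d :=
  fun i => if (m.-1 <= i)%N then Aat A (i - m.-1) *m vat v (i - m.-1) else 0.

Definition Bsym (R : realType) (m d : nat) (A : 'I_m -> 'M[R]_d) (b : bool) :=
  if b then B1 A else @B0 R m d.

(* prodB A x n v = B_{x_n} ... B_{x_1} v  (x_1, x_2, ... are x 1, x 2, ...) *)
Fixpoint prodB (R : realType) (m d : nat) (A : 'I_m -> 'M[R]_d) (x : nat -> bool)
  (n : nat) (v : blkvec R m d) : blkvec R m d :=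
  match n with
  | 0 => v
  | n'.+1 => Bsym A (x n) (prodB A x n' v)
  end.

Definition inVk (R : realType) (m d : nat) (k : nat) (v : blkvec R m d) : Prop :=
  forall i : 'I_(nblk m), (i : nat) <> k -> v i = 0.

Definition nonzero (R : realType) (m d : nat) (v : blkvec R m d) : Prop :=
  exists i : 'I_(nblk m), v i != 0.

(* Main.v *)
Require Import Defs.
From mathcomp Require Import all_boot all_order all_algebra.
From mathcomp Require Import reals.
From mathcomp Require Import zify.
Set Implicit Arguments. Unset Strict Implicit. Unset Printing Implicit Defensive.
Import Order.TTheory GRing.Theory Num.Theory.
Local Open Scope ring_scope.

Definition stp (m : nat) (b : bool) (o : option nat) : option nat :=
  match o with
  | None => None
  | Some p => if b then (if (p <= m.-1)%N then Some (p + m.-1)%N else None)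
              else (if p == 0%N then None else Some p.-1)
  end.

Fixpoint pos (m : nat) (x : nat -> bool) (n : nat) : option nat :=
  match n with
  | 0 => Some m.-1
  | n'.+1 => stp m (x n) (pos m x n')
  end.

Definition zerov (R : realType) (m d : nat) (v : blkvec R m d) := forall i, v i = 0.

Lemma vat_zero (R : realType) (m d : nat) (v : blkvec R m d) p k :
  inVk p v -> k <> p -> vat v k = 0.
Proof.
move=> H kp; rewrite /vat; case: insubP => [i _ ik|_] //.
by apply: H; rewrite ik.
Qed.

Lemma vat_zerov (R : realType) (m d : nat) (v : blkvec R m d) k :
  zerov v -> vat v k = 0.
Proof. by move=> H; rewrite /vat; case: insubP => [i _ ik|_] //. Qed.

Lemma Bsym_zero (R : realType) (m d : nat) (A : 'I_m -> 'M[R]_d) b (v : blkvec R m d) :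
  zerov v -> zerov (Bsym A b v).
Proof.
move=> H i; case: b => /=; rewrite /B1 /B0.
  by case: ifP => // _; rewrite vat_zerov // mulmx0.
by rewrite vat_zerov.
Qed.

Lemma Bsym_step (R : realType) (m d : nat) (A : 'I_m -> 'M[R]_d) b (v : blkvec R m d) p :
  inVk p v ->
  (forall q, stp m b (Some p) = Some q -> inVk q (Bsym A b v)) /\
  (stp m b (Some p) = None -> zerov (Bsym A b v)).
Proof.
move=> H; case: b => /=.
  case: ifP => hp; split => //.
  - move=> q [<-] i iq; rewrite /B1; case: ifP => // hi.
    rewrite (vat_zero H) ?mulmx0 //; lia.
  - move=> _ i; rewrite /B1; case: ifP => // hi.
    have [E|E] := eqVneq (i - m.-1)%N p.
      rewrite E /Aat; case: insubP => [j Pj vj|_]; last by rewrite mul0mx.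
      exfalso; move: Pj hp; rewrite -vj; lia.
    by rewrite (vat_zero H) ?mulmx0 //; apply/eqP.
case: ifP => hp; split => //.
  by move=> _ i; rewrite /B0 (vat_zero H) //; move/eqP: hp; lia.
by move=> q [<-] i iq; rewrite /B0 (vat_zero H) //; move/eqP: hp; lia.
Qed.

Lemma prodB_pos (R : realType) (m d : nat) (A : 'I_m -> 'M[R]_d) x (v : blkvec R m d) n :
  inVk m.-1 v ->
  (forall q, pos m x n = Some q -> inVk q (prodB A x n v)) /\
  (pos m x n = None -> zerov (prodB A x n v)).
Proof.
move=> Hv; elim: n => [|n [IH1 IH2]] /=; first by split => // q [<-].
case E: (pos m x n) => [p|].
  exact: (Bsym_step A (x n.+1) (IH1 p E)).
by split => // _; apply: Bsym_zero; apply: IH2.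
Qed.

Lemma block (m : nat) (x : nat -> bool) t :
  (1 <= m)%N -> (forall n, pos m x n <> None) -> pos m x t = Some m.-1 ->
  forall j, (j <= m)%N -> exists q, pos m x (t + j) = Some q /\
    ((count x (iota (t + 1) j) = 0 /\ j < m /\ q = m.-1 - j) \/
     (count x (iota (t + 1) j) = 1 /\ q = 2 * m - 1 - j))%N.
Proof.
move=> hm alive ht; elim => [|j IH] hj.
  exists m.-1; rewrite addn0 ht; split => //; left; split => //; lia.
have [q [Hq Hc]] := IH (ltnW hj).
have := alive (t + j.+1)%N.
have -> : count x (iota (t + 1) j.+1) = (count x (iota (t + 1) j) + x (t + j).+1)%N.
  rewrite -(addn1 j) iotaD count_cat /= addn0.
  by have -> : (t + 1 + j = (t + j).+1)%N by lia.
rewrite addnS /= Hq.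
case: (x (t + j).+1) => /=.
  case: ifP => hq hA; last by case: (hA erefl).
  eexists; split; first reflexivity.
  case: Hc => [[c0 [jl qe]]|[c1 qe]]; last by exfalso; move: hq; rewrite qe; lia.
  right; rewrite c0; split => //; lia.
case: ifP => hq hA; first by case: (hA erefl).
eexists; split; first reflexivity.
move/eqP: hq => hq.
case: Hc => [[c0 [jl qe]]|[c1 qe]].
  left; rewrite c0; split => //; lia.
right; rewrite c1; split => //; lia.
Qed.

Theorem lemma7 (R : realType) (m d : nat) (hm : (1 <= m)%N) (hd : (1 <= d)%N)
  (A : 'I_m -> 'M[R]_d) (x : nat -> bool) :
  (forall n : nat, (1 <= n)%N ->
     exists v : blkvec R m d, inVk m.-1 v /\ nonzero (prodB A x n v)) ->
  forall n : nat, count x (iota (m * n + 1) m) = 1%N.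
Proof.
move=> H.
have alive : forall n, pos m x n <> None.
  case => // n E.
  have [v [Hv [i Hi]]] := H n.+1 isT.
  have [_ H2] := prodB_pos A x n.+1 Hv.
  by move: Hi; rewrite H2 // eqxx.
have P : forall n, pos m x (m * n) = Some m.-1.
  elim => [|n IH]; first by rewrite muln0.
  have [q [Hq [[_ [jl _]]|[_ qe]]]] := block hm alive IH (leqnn m).
    by move: jl; rewrite ltnn.
  by rewrite mulnS addnC Hq qe; congr Some; lia.
move=> n.
have [q [_ [[_ [jl _]]|[c _]]]] := block hm alive (P n) (leqnn m) => //.
by move: jl; rewrite ltnn.
Qed.
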